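(* If $G$ is a permutation graph then $L(G)^2$ is a trapezoid graph.
   Context: A permutation diagram on $n$ points: two horizontal lines $L_1,L_2$, on each of which the points $1,\dots,n$ are placed in some linear order, and for each $k$ the two points labeled $k$ are joined by a straight segment. A permutation graph is the intersection graph of the segments of a permutation diagram. A trapezoid diagram: on each of two horizontal lines $L_1,L_2$ choose $n$ intervals, and for each $k$ connect the left and right endpoints of the $k$-th interval on $L_1$ with the left and right endpoints of the $k$-th interval on $L_2$, giving $n$ trapezoids. A trapezoid graph is the intersection graph of the trapezoids of a trapezoid diagram. For a graph $H$, $L(H)^2$ has the edges of $H$ as vertices, two distinct edges $e,f$ being adjacent if they share an endpoint or some edge of $H$ joins an endpoint of $e$ to an endpoint of $f$. *)

(* Defs.v *)
From HB Require Import structures.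
From mathcomp Require Import all_boot all_order all_algebra.
From mathcomp Require Import reals.
Set Implicit Arguments. Unset Strict Implicit. Unset Printing Implicit Defensive.
Import Order.TTheory GRing.Theory Num.Theory.
Local Open Scope ring_scope.

Definition simple_graph (T : finType) (e : rel T) : Prop :=
  symmetric e /\ irreflexive e.

(* The plane is R * R; L1 is the line y = 0, L2 is the line y = 1. *)

Definition segment (R : realType) (a b : R) (p : R * R) : Prop :=
  0 <= p.2 <= 1 /\ p.1 = (1 - p.2) * a + p.2 * b.

(* The (closed) trapezoid with interval [l1, r1] on L1 and [l2, r2] on L2,
   i.e. the convex hull of the four endpoints. *)
Definition trapezoid (R : realType) (l1 r1 l2 r2 : R) (p : R * R) : Prop :=
  0 <= p.2 <= 1 /\
  (1 - p.2) * l1 + p.2 * l2 <= p.1 <= (1 - p.2) * r1 + p.2 * r2.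

Definition is_permutation_graph (R : realType) (T : finType) (e : rel T) : Prop :=
  exists p1 p2 : T -> R, injective p1 /\ injective p2 /\
    forall u v : T, u != v ->
      (e u v <-> exists p, segment (p1 u) (p2 u) p /\ segment (p1 v) (p2 v) p).

Definition is_trapezoid_graph (R : realType) (T : finType) (e : rel T) : Prop :=
  exists l1 r1 l2 r2 : T -> R,
    (forall k, l1 k <= r1 k /\ l2 k <= r2 k) /\
    forall u v : T, u != v ->
      (e u v <-> exists p, trapezoid (l1 u) (r1 u) (l2 u) (r2 u) p /\
                           trapezoid (l1 v) (r1 v) (l2 v) (r2 v) p).

Definition is_edge (T : finType) (e : rel T) : pred {set T} :=
  fun A => [exists u, exists v, e u v && (A == [set u; v])].

Definition edge_type (T : finType) (e : rel T) := {A : {set T} | is_edge e A}.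

Definition L2_adj (T : finType) (e : rel T) : rel (edge_type e) :=
  fun f g => (f != g) &&
    [exists x in val f, exists y in val g, (x == y) || e x y].

(* Main.v *)
Require Import Defs.
From HB Require Import structures.
From mathcomp Require Import all_boot all_order all_algebra.
From mathcomp Require Import reals.
From mathcomp Require Import ring lra.
Set Implicit Arguments. Unset Strict Implicit. Unset Printing Implicit Defensive.
Import Order.TTheory GRing.Theory Num.Theory.
Local Open Scope ring_scope.

Lemma seg_trap (R : realType) (a b l1 r1 l2 r2 : R) p :
  l1 <= a <= r1 -> l2 <= b <= r2 -> segment a b p -> trapezoid l1 r1 l2 r2 p.
Proof.
case: p => x t /= /andP[la ar] /andP[lb br] [/andP[t0 t1] /= ->]; rewrite /= in t0 t1.
have e1 : 0 <= 1 - t by rewrite subr_ge0.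
rewrite /trapezoid /= t0 t1; split=> //; apply/andP; split.
  have := mulr_ge0 e1 (eqbRL (subr_ge0 l1 a) la).
  have := mulr_ge0 t0 (eqbRL (subr_ge0 l2 b) lb). nra.
have := mulr_ge0 e1 (eqbRL (subr_ge0 a r1) ar).
have := mulr_ge0 t0 (eqbRL (subr_ge0 b r2) br). nra.
Qed.

Lemma trap_disj (R : realType) (a b c d a' b' c' d' : R) p :
  trapezoid a b c d p -> trapezoid a' b' c' d' p -> b < a' -> d < c' -> False.
Proof.
case: p => x t; rewrite /trapezoid /= => -[/andP[t0 t1] /andP[_ h1]] [_ /andP[h2 _]] hb hd.
pose m := Num.min (a' - b) (c' - d).
have m0 : 0 < m by rewrite lt_min !subr_gt0 hb hd.
have ma : m <= a' - b by rewrite ge_min lexx.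
have mc : m <= c' - d by rewrite ge_min lexx orbT.
nra.
Qed.

Lemma cross (R : realType) (a b c d : R) :
  a < c -> d < b -> exists p, segment a b p /\ segment c d p.
Proof.
move=> ac db.
pose D := (c - a) + (b - d).
have D0 : 0 < D by rewrite /D addr_gt0 // subr_gt0.
pose t := (c - a) / D.
have tD : t * D = c - a by rewrite /t mulfVK // gt_eqF.
have t0 : 0 <= t by rewrite /t divr_ge0 // ltW // subr_gt0.
have t1 : t <= 1.
  by rewrite /t ler_pdivrMr // mul1r /D lerDl subr_ge0 ltW.
exists ((1 - t) * a + t * b, t); rewrite /segment /= t0 t1; split; split => //=.
rewrite /D in tD; lra.
Qed.

Lemma mm (R : realType) (T : finType) (q : T -> R) u v a :
  a \in [set u; v] -> Num.min (q u) (q v) <= q a <= Num.max (q u) (q v).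
Proof.
by rewrite in_set2 => /orP[]/eqP->; rewrite ge_min le_max lexx ?orbT.
Qed.

Lemma combine (R : realType) (U1 U2 V1 V2 X1 X2 Y1 Y2 : R) :
 ~(U1<V1/\U2<V2) -> ~(V1<U1/\V2<U2) -> ~(X1<Y1/\X2<Y2) -> ~(Y1<X1/\Y2<X2) ->
 (U1<X1/\U2<X2)\/(X1<U1/\X2<U2) -> (U1<Y1/\U2<Y2)\/(Y1<U1/\Y2<U2) ->
 (V1<X1/\V2<X2)\/(X1<V1/\X2<V2) -> (V1<Y1/\V2<Y2)\/(Y1<V1/\Y2<V2) ->
 (Num.max X1 Y1 < Num.min U1 V1 /\ Num.max X2 Y2 < Num.min U2 V2) \/
 (Num.max U1 V1 < Num.min X1 Y1 /\ Num.max U2 V2 < Num.min X2 Y2).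
Proof.
rewrite !gt_max !lt_min => H1 H2 H3 H4.
case=> -[? ?]; case=> -[? ?]; case=> -[? ?]; case=> -[? ?];
first [ right; split; repeat (apply/andP; split); lra
      | left; split; repeat (apply/andP; split); lra
      | exfalso; first [apply: H1 | apply: H2 | apply: H3 | apply: H4]; split; lra ].
Qed.

Definition pk (T : finType) (e : rel T) (f : edge_type e) :=
  [pick uv : T * T | e uv.1 uv.2 && (val f == [set uv.1; uv.2])].

Definition endf (R : realType) (T : finType) (e : rel T) (op : R -> R -> R)
  (q : T -> R) (f : edge_type e) : R :=
  if pk f is Some uv then op (q uv.1) (q uv.2) else 0.

Lemma endsP (R : realType) (T : finType) (e : rel T) (f : edge_type e) :
  exists u v, e u v /\ val f = [set u; v] /\
    forall (op : R -> R -> R) q, endf op q f = op (q u) (q v).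
Proof.
rewrite /endf /pk; case: pickP => [[u v] /andP[/= euv /eqP fE]|H].
  by exists u, v.
exfalso; case/existsP: (valP f) => u /existsP [v /andP[euv /eqP fE]].
by move: (H (u, v)); rewrite /= euv fE eqxx.
Qed.

Theorem lemma6 (R : realType) (T : finType) (e : rel T) :
  simple_graph e -> is_permutation_graph R e ->
  is_trapezoid_graph R (@L2_adj T e).
Proof.
move=> [esym eirr] [p1 [p2 [i1 [i2 hp]]]].
have neq : forall a b, e a b -> a != b.
  by move=> a b eab; apply/eqP => ab; move: eab; rewrite ab eirr.
have S1 : forall a b, e a b -> ~ (p1 a < p1 b /\ p2 a < p2 b).
  move=> a b eab [h1 h2].
  have [p [sa sb]] := (hp a b (neq a b eab)).1 eab.
  have ta : trapezoid (p1 a) (p1 a) (p2 a) (p2 a) p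
    by apply: seg_trap sa; rewrite lexx.
  have tb : trapezoid (p1 b) (p1 b) (p2 b) (p2 b) p
    by apply: seg_trap sb; rewrite lexx.
  exact: (trap_disj ta tb h1 h2).
have S2 : forall a b, a != b -> ~~ e a b ->
    (p1 a < p1 b /\ p2 a < p2 b) \/ (p1 b < p1 a /\ p2 b < p2 a).
  move=> a b ab nab.
  have cr : forall p, ~ (segment (p1 a) (p2 a) p /\ segment (p1 b) (p2 b) p).
    by move=> p sp; move/negP: nab; apply; apply/(hp a b ab); exists p.
  case: (ltgtP (p1 a) (p1 b)) => h1; last by move/i1/eqP: h1; rewrite (negbTE ab).
  - case: (ltgtP (p2 a) (p2 b)) => h2; last by move/i2/eqP: h2; rewrite (negbTE ab).
    + by left.
    + by have [p] := cross h1 h2; case/cr.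
  - case: (ltgtP (p2 a) (p2 b)) => h2; last by move/i2/eqP: h2; rewrite (negbTE ab).
    + by have [p [? ?]] := cross h1 h2; case: (cr p).
    + by right.
pose L1 := @endf R T e Num.min p1; pose R1 := @endf R T e Num.max p1.
pose L2 := @endf R T e Num.min p2; pose R2 := @endf R T e Num.max p2.
exists L1, R1, L2, R2; split.
  move=> k; have [u [v [_ [_ E]]]] := endsP R k.
  by rewrite /L1 /R1 /L2 /R2 !E !ge_min !le_max !lexx.
move=> f g fg.
have [u [v [euv [fE Ef]]]] := endsP R f.
have [x [y [exy [gE Eg]]]] := endsP R g.
rewrite /L1 /R1 /L2 /R2 !Ef !Eg.
split.
  case/andP=> _ /existsP [a /andP[af /existsP[b /andP[bg hab]]]].
  rewrite fE in af; rewrite gE in bg.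
  have [p [sa sb]] : exists p, segment (p1 a) (p2 a) p /\ segment (p1 b) (p2 b) p.
    case/orP: hab => [/eqP <-|eab]; last exact/(hp a b (neq a b eab)).
    exists (p1 a, 0); rewrite /segment /= lexx ler01; split; split => //; ring.
  exists p; split.
    by apply: (seg_trap _ _ sa); apply: mm.
  by apply: (seg_trap _ _ sb); apply: mm.
move=> [p [tf tg]]; apply/andP; split => //.
apply: contraT => nadj.
have H : forall a b, a \in [set u; v] -> b \in [set x; y] -> (a != b) && ~~ e a b.
  move=> a b ha hb; rewrite -negb_or; apply/negP => hab; move/negP: nadj; apply.
  apply/existsP; exists a; rewrite fE ha /=; apply/existsP; exists b.
  by rewrite gE hb.
have P : forall a b, a \in [set u; v] -> b \in [set x; y] ->
    (p1 a < p1 b /\ p2 a < p2 b) \/ (p1 b < p1 a /\ p2 b < p2 a).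
  by move=> a b ha hb; case/andP: (H a b ha hb); apply: S2.
have inu : u \in [set u; v] by rewrite !inE eqxx.
have inv : v \in [set u; v] by rewrite !inE eqxx orbT.
have inx : x \in [set x; y] by rewrite !inE eqxx.
have iny : y \in [set x; y] by rewrite !inE eqxx orbT.
exfalso; case: (combine (S1 _ _ euv) (S1 _ _ (eqbLR (esym u v) euv))
         (S1 _ _ exy) (S1 _ _ (eqbLR (esym x y) exy))
         (P _ _ inu inx) (P _ _ inu iny) (P _ _ inv inx) (P _ _ inv iny)).
  by case=> h1 h2; apply: (trap_disj tg tf h1 h2).
by case=> h1 h2; apply: (trap_disj tf tg h1 h2).
Qed.
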